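(* For every positive integer $t$, setting $n=3\cdot 2^{2t-1}+1$, there exists an equiangular set of $\frac{2}{9}(n-1)(n+2)$ lines in $\mathbb{R}^n$.
   Context: A set of lines in $\mathbb{R}^n$ (or $\mathbb{C}^n$) spanned by unit vectors $v_1,\dots,v_r$ is equiangular if there is a constant $c$ such that $|\langle v_i,v_j\rangle|=c$ for all $1\le i<j\le r$. *)

(* Defs.v *)
From Stdlib Require Import Reals Lra Lia Arith.
Open Scope R_scope.

(* A vector in R^n is represented by its coordinate function on indices k < n. *)
Definition inner (n : nat) (x y : nat -> R) : R :=
  match n with
  | O => 0
  | S m => sum_f_R0 (fun k => x k * y k) m
  end.

Definition same_line (n : nat) (x y : nat -> R) : Prop :=
  exists a : R, forall k, (k < n)%nat -> x k = a * y k.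

Definition equiangular_lines (n r : nat) (v : nat -> nat -> R) : Prop :=
  (forall i, (i < r)%nat -> inner n (v i) (v i) = 1) /\
  (forall i j, (i < r)%nat -> (j < r)%nat -> i <> j -> ~ same_line n (v i) (v j)) /\
  exists c : R, forall i j, (i < r)%nat -> (j < r)%nat -> i <> j ->
    Rabs (inner n (v i) (v j)) = c.

(* Main.v *)
Require Import Defs.
From Stdlib Require Import Reals Lra Lia Arith.

Module M.
From mathcomp Require Import all_boot all_order all_algebra all_field.
From mathcomp Require Import ring lra zify Rstruct.
Local Set Implicit Arguments. Local Unset Strict Implicit. Local Unset Printing Implicit Defensive.
Import GRing.Theory Num.Theory.
Local Open Scope ring_scope.

Section Kerdock.
Variable F : finFieldType.
Variable k : nat.
Hypothesis h2 : (2%:R : F) = 0.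
Hypothesis hcard : #|F| = (2 ^ k)%N.
Hypothesis hodd : odd k.

Lemma sqrD (x y : F) : (x + y) ^+ 2 = x ^+ 2 + y ^+ 2.
Proof. ring: h2. Qed.

Lemma frob (x y : F) i : (x + y) ^+ (2 ^ i) = x ^+ (2 ^ i) + y ^+ (2 ^ i).
Proof.
elim: i x y => [|i IH] x y; first by rewrite !expr1.
by rewrite expnS !exprM sqrD IH.
Qed.

Lemma expk (x : F) : x ^+ (2 ^ k) = x.
Proof. by rewrite -hcard expf_card. Qed.

Lemma expk2 (x : F) i : x ^+ (2 ^ (i + k)) = x ^+ (2 ^ i).
Proof. by rewrite expnD mulnC exprM expk. Qed.

Definition Tr (x : F) : F := \sum_(0 <= i < k) x ^+ (2 ^ i).

Lemma periodic (f : nat -> F) : (forall i, f (i + k)%N = f i) ->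
  forall j, \sum_(0 <= i < k) f (j + i)%N = \sum_(0 <= i < k) f i.
Proof.
move=> hf; elim=> [|j IH]; first by apply: eq_bigr => i _; rewrite add0n.
rewrite -IH.
have e1 := @big_nat_recl _ 0 +%R k 0 (fun i => f (j + i)%N) (leq0n k).
have e2 := @big_nat_recr _ 0 +%R k 0 (fun i => f (j + i)%N) (leq0n k).
rewrite e2 /= in e1.
have -> : \sum_(0 <= i < k) f (j.+1 + i)%N = \sum_(0 <= i < k) f (j + i.+1)%N.
  by apply: eq_bigr => i _; rewrite addSnnS.
have : f (j + k)%N = f (j + 0)%N by rewrite addn0 hf.
move=> e3; rewrite e3 in e1.
apply: (@addrI _ (f (j+0)%N)); rewrite -e1 addrC //.
Qed.

Lemma TrD x y : Tr (x + y) = Tr x + Tr y.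
Proof. by rewrite /Tr -big_split; apply: eq_bigr => i _; rewrite frob. Qed.

Lemma Tr0 : Tr 0 = 0.
Proof. by rewrite /Tr big1 // => i _; rewrite expr0n expn_eq0. Qed.

Lemma one1 : (1 + 1 : F) = 0.
Proof. by rewrite -h2. Qed.

Lemma Tr1 : Tr 1 = 1.
Proof.
rewrite /Tr (eq_bigr (fun _ => 1)) => [|i _]; last by rewrite expr1n.
rewrite sumr_const_nat subn0 -[k]odd_double_half hodd -mul2n mulrnDr.
by rewrite mulrnA -[1 *+ 2]/(2%:R) h2 mul0rn addr0.
Qed.

Lemma Tr_sq x : Tr (x ^+ 2) = Tr x.
Proof.
rewrite /Tr -(@periodic (fun i => x ^+ (2 ^ i)) (expk2 x) 1).
by apply: eq_bigr => i _; rewrite -exprM -expnS add1n.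
Qed.

Lemma sq_sum (I : Type) (r : seq I) (P : pred I) (g : I -> F) :
  (\sum_(i <- r | P i) g i) ^+ 2 = \sum_(i <- r | P i) (g i) ^+ 2.
Proof.
apply: (big_morph (fun x : F => x ^+ 2)); first exact: sqrD.
by rewrite expr0n.
Qed.

Lemma Tr_bit x : Tr x ^+ 2 = Tr x.
Proof.
rewrite /Tr sq_sum -/(Tr x) -Tr_sq; apply: eq_bigr => i _; exact: exprAC.
Qed.

Lemma Tr_pow x j : Tr (x ^+ (2 ^ j)) = Tr x.
Proof. elim: j => [|j IH]; first by rewrite expr1. by rewrite expnSr exprM Tr_sq. Qed.

Definition bit (e : F) := e ^+ 2 = e.

Lemma bitP e : bit e -> e = 0 \/ e = 1.
Proof.
rewrite /bit => h.
have : e * (e - 1) = 0 by rewrite mulrBr mulr1 -expr2 h subrr.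
by move/eqP; rewrite mulf_eq0 subr_eq0 => /orP [/eqP ->|/eqP ->]; [left|right].
Qed.

Lemma bitD a b : bit a -> bit b -> bit (a + b).
Proof. by rewrite /bit sqrD => -> ->. Qed.
Lemma bitM a b : bit a -> bit b -> bit (a * b).
Proof. by rewrite /bit exprMn => -> ->. Qed.
Lemma bit0 : bit 0. Proof. by rewrite /bit expr0n. Qed.
Lemma bit1 : bit 1. Proof. by rewrite /bit expr1n. Qed.
Lemma bitTr x : bit (Tr x). Proof. exact: Tr_bit. Qed.

Lemma TrZ e x : bit e -> Tr (e * x) = e * Tr x.
Proof. by case/bitP=> ->; rewrite ?mul0r ?Tr0 ?mul1r. Qed.

Lemma Tr_bitid e : bit e -> Tr e = e.
Proof. by move=> he; rewrite -[e in Tr e]mulr1 TrZ // Tr1 mulr1. Qed.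


Definition G (z w : F) (e : nat) := Tr (z * w ^+ (2 ^ e)).

Lemma TrTr z w : Tr z * Tr w = \sum_(0 <= e < k) G z w e.
Proof.
rewrite /Tr mulr_suml.
rewrite (eq_bigr (fun i => \sum_(0 <= e < k) (z * w ^+ (2 ^ e)) ^+ (2 ^ i))).
  by rewrite exchange_big.
move=> i _.
rewrite -(@periodic (fun e => w ^+ (2 ^ e)) (expk2 w) i) mulr_sumr.
apply: eq_bigr => e _.
by rewrite exprMn -exprM -expnD addnC.
Qed.

Lemma Grev z w d : (d <= k)%N -> Tr (w * z ^+ (2 ^ d)) = G z w (k - d).
Proof.
move=> hd; rewrite /G -(Tr_pow _ (k - d)) exprMn -exprM -expnD subnKC //.
by rewrite expk mulrC.
Qed.

Definition hh := k./2.
Lemma khh : k = (hh + hh).+1.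
Proof. by rewrite /hh -{1}[k]odd_double_half hodd -addnn. Qed.

Definition h0 (z : F) : F := \sum_(1 <= d < hh.+1) Tr (z * z ^+ (2 ^ d)).

Lemma Gsplit z w : \sum_(0 <= e < k) G z w e =
  G z w 0 + \sum_(1 <= d < hh.+1) G z w d + \sum_(1 <= d < hh.+1) G z w (k - d).
Proof.
rewrite {1}khh big_nat_recl // -addrA; congr (_ + _).
rewrite (@big_cat_nat _ _ _ hh) //=; last by rewrite leq_addr.
congr (_ + _); first by rewrite big_add1 /=.
rewrite big_add1 /= big_nat_rev /=.
rewrite -{1}[hh]add0n big_addn.
rewrite addnK.
apply: eq_big_nat => i /andP [_ hi].
congr (G z w _); rewrite khh; lia.
Qed.


Lemma h0D z w : h0 (z + w) = h0 z + h0 w + Tr z * Tr w + Tr (z * w).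
Proof.
have e1 : h0 (z + w) = h0 z + h0 w + \sum_(1 <= d < hh.+1) G z w d
    + \sum_(1 <= d < hh.+1) G z w (k - d).
  rewrite /h0 -!big_split /=; apply: eq_big_nat => d /andP [_ hd].
  rewrite -Grev; last by rewrite khh; lia.
  by rewrite frob /G -!TrD; congr Tr; ring.
rewrite e1 TrTr Gsplit /G expr1; ring: h2.
Qed.

Lemma h0_bit z : bit (h0 z).
Proof. by apply: (big_ind bit) => //; [exact: bit0 | exact: bitD | move=> i _; exact: bitTr]. Qed.

Lemma h00 : h0 0 = 0.
Proof. by rewrite /h0 big1 // => i _; rewrite mul0r Tr0. Qed.


Local Notation V := (bool * F)%type.
Definition vadd (u v : V) : V := (u.1 (+) v.1, u.2 + v.2).
Definition vzero : V := (false, 0).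
Definition b2F (b : bool) : F := if b then 1 else 0.

Lemma b2F_xor a b : b2F (a (+) b) = b2F a + b2F b.
Proof. by case: a; case: b; rewrite /= ?addr0 ?add0r ?one1. Qed.
Lemma b2F_bit b : bit (b2F b).
Proof. by case: b; [exact: bit1 | exact: bit0]. Qed.

Lemma vaddK u v : vadd (vadd u v) v = u.
Proof. by case: u v => [a x] [b y]; rewrite /vadd /= addbK; congr pair; ring: h2. Qed.
Lemma vaddC u v : vadd u v = vadd v u.
Proof. by rewrite /vadd addbC addrC. Qed.
Lemma vadd0 u : vadd u vzero = u.
Proof. by case: u => a x; rewrite /vadd /= addbF addr0. Qed.

Definition E (r : F) (a v : V) : F :=
  h0 (r * v.2) + b2F v.1 * Tr (r * v.2) + Tr (a.2 * v.2) + b2F a.1 * b2F v.1.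
Definition P (r : F) (v u : V) : F :=
  Tr (r * v.2) * Tr (r * u.2) + Tr (r * v.2 * (r * u.2))
  + b2F v.1 * Tr (r * u.2) + b2F u.1 * Tr (r * v.2).

Lemma E_polar r a v u : E r a v + E r a (vadd v u) + E r a u = P r v u.
Proof.
case: v u => [xi x] [eta y]; rewrite /E /P /vadd /=.
rewrite !mulrDr h0D b2F_xor !TrD; ring: h2.
Qed.

Lemma P_add r v w u : P r (vadd v w) u = P r v u + P r w u.
Proof.
case: v w u => [xi x] [eta y] [z zz]; rewrite /P /vadd /=.
rewrite b2F_xor !mulrDr !mulrDl !TrD; ring.
Qed.

Lemma E_bit r a v : bit (E r a v).
Proof.
rewrite /E; repeat first [exact: h0_bit | exact: bitTr | exact: b2F_bit | apply: bitD | apply: bitM].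
Qed.

Lemma P_bit r v u : bit (P r v u).
Proof.
rewrite /P; repeat first [exact: h0_bit | exact: bitTr | exact: b2F_bit | apply: bitD | apply: bitM].
Qed.

Lemma E0 r a : E r a vzero = 0.
Proof. by rewrite /E /= !mulr0 h00 Tr0 !mulr0 !addr0. Qed.

Lemma char2_eq (x y : F) : x + y = 0 -> x = y.
Proof. move=> h; have -> : y = x + (x + y) by ring: h2. by rewrite h addr0. Qed.

Lemma Tr_nondeg z : (forall x, Tr (x * z) = 0) -> z = 0.
Proof.
move=> h; apply/eqP; apply/negPn/negP => hz.
have := h z^-1; rewrite mulVf // Tr1 => /eqP; by rewrite oner_eq0.
Qed.

Lemma radical r r' u : r != r' -> (forall v, P r v u + P r' v u = 0) -> u = vzero.
Proof.
move=> hr hP; case: u hP => [eta y] hP.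
set u0 := r + r'.
have u0nz : u0 != 0.
  apply/negP => /eqP h; move/negP: hr; apply; apply/eqP; exact: char2_eq.
have h1 := hP (true, 0); rewrite /P /= ?(mulr0, mul0r, Tr0, mul1r, addr0, add0r) in h1.
have htau := char2_eq h1.
set tau := Tr (r * y) in htau h1.
have taubit : bit tau by exact: bitTr.
have hz : forall x, Tr (x * (tau * u0 + u0 ^+ 2 * y + b2F eta * u0)) = 0.
  move=> x; have := hP (false, x); rewrite /P /= ?(mul0r, addr0, add0r) -htau => <-.
  rewrite ![Tr _ * tau]mulrC -!(TrZ _ taubit) -!(TrZ _ (b2F_bit eta)).
  have T6 : forall a b c d e f, Tr a + Tr b + Tr c + (Tr d + Tr e + Tr f) = Tr (a+b+c+(d+e+f)) by move=> *; rewrite !TrD.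
  rewrite T6; congr Tr; rewrite /u0; ring: h2.
have hz0 := Tr_nondeg hz.
have hy : u0 * y = tau + b2F eta.
  apply: (mulfI u0nz); apply: char2_eq; rewrite -hz0; ring: h2.
have hsum : Tr (u0 * y) = 0 by rewrite /u0 mulrDl TrD -htau -/tau; ring: h2.
rewrite hy Tr_bitid in hsum; last by apply: bitD => //; exact: b2F_bit.
rewrite hsum in hy.
have y0 : y = 0 by apply/eqP; rewrite -(mulrI_eq0 _ (mulfI u0nz)) hy.
have e0 : b2F eta = 0 by move: hsum; rewrite /tau y0 mulr0 Tr0 add0r.
rewrite y0 /vzero; clear -e0; case: eta e0 => //= /eqP; rewrite oner_eq0 //.
Qed.


Definition chi (e : F) := if e == 0 then (1%:R : R) else - 1%:R.

Lemma chi0 : chi 0 = 1. Proof. by rewrite /chi eqxx. Qed.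
Lemma chiE e : chi e = if e == 0 then 1 else -1. Proof. by []. Qed.
Lemma chi1 : chi 1 = -1. Proof. by rewrite chiE oner_eq0. Qed.

Lemma chiD e e' : bit e -> bit e' -> chi (e + e') = chi e * chi e'.
Proof.
case/bitP=> ->; case/bitP=> ->; rewrite ?addr0 ?add0r ?chi0 ?chi1 ?mulr1 ?mul1r //.
by rewrite one1 chi0 mulrNN mulr1.
Qed.

Lemma chi_sq e : chi e * chi e = 1.
Proof. by rewrite chiE; case: (e == 0); rewrite ?mulr1 ?mulrNN ?mulr1. Qed.

Lemma inj_vadd u : injective (fun v => vadd v u).
Proof. exact: (can_inj (g := fun v => vadd v u) (fun v => vaddK v u)). Qed.

Lemma inj_vaddl v : injective (fun u => vadd v u).
Proof.
apply: (can_inj (g := fun w => vadd w v)) => u /=; by rewrite [vadd v u]vaddC vaddK.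
Qed.

Lemma sum_zero (g : V -> F) v0 : (forall v, bit (g v)) ->
  (forall v w, g (vadd v w) = g v + g w) -> g v0 = 1 ->
  \sum_(v : V) chi (g v) = 0.
Proof.
move=> hb hadd h1.
have e : \sum_(v : V) chi (g v) = - \sum_(v : V) chi (g v).
  rewrite {1}(reindex_inj (@inj_vadd v0)) /= -sumrN; apply: eq_bigr => v _.
  by rewrite hadd chiD // h1 ?chi1 ?mulrN1 //; exact: bit1.
move: e; set S := \sum_(v : V) _; lra.
Qed.

Lemma sum_sq (g : V -> F) : (forall v, bit (g v)) -> g vzero = 0 ->
  (forall u, u != vzero -> exists hu : V -> F,
     [/\ forall v, bit (hu v), forall v w, hu (vadd v w) = hu v + hu w,
         exists v0, hu v0 = 1 & forall v, g v + g (vadd v u) = hu v + g u]) ->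
  (\sum_(v : V) chi (g v)) ^+ 2 = #|{: V}|%:R.
Proof.
move=> hb hg0 hu.
rewrite expr2 mulr_suml.
rewrite (eq_bigr (fun v => \sum_(u : V) chi (g v + g (vadd v u)))); last first.
  move=> v _; rewrite mulr_sumr (reindex_inj (@inj_vaddl v)) /=.
  by apply: eq_bigr => u _; rewrite chiD.
rewrite exchange_big (bigD1 vzero) //= [X in _ + X]big1 => [|u hu0]; last first.
  have [h [hbit hadd [v0 hv0] hrel]] := hu u hu0.
  rewrite (eq_bigr (fun v => chi (h v) * chi (g u))) => [|v _]; last first.
    by rewrite hrel chiD.
  by rewrite -mulr_suml (sum_zero hbit hadd hv0) mul0r.
rewrite addr0 (eq_bigr (fun _ => 1)) => [|v _]; last first.
  have -> : g v + g (vadd v vzero) = 0 by rewrite vadd0; ring: h2.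
  exact: chi0.
by rewrite sumr_const.
Qed.


Variables p q be s : R.
Hypothesis H1 : q * q + be * be = 1.
Hypothesis H2 : p * p * #|{: V}|%:R + be * be = 1.
Hypothesis H3 : q * p = be * be.
Hypothesis H4 : p * p * s = be * be.
Hypothesis Hs : s * s = #|{: V}|%:R.
Hypothesis Hs0 : 0 <= s.

Local Notation Cd := (V + (unit + F))%type.
Local Notation Ln := (V + (F * V))%type.

Definition vecL (l : Ln) (c : Cd) :=
  match l with
  | inl b => match c with
             | inl x => if x == b then q else 0
             | inr (inl _) => be
             | inr (inr _) => 0 end
  | inr (r, a) => match c with
             | inl x => p * chi (E r a x)
             | inr (inl _) => 0
             | inr (inr r') => if r' == r then be else 0 end
  end.

Definition ip (l l' : Ln) := \sum_(c : Cd) vecL l c * vecL l' c.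

Lemma sumC (f : Cd -> R) : \sum_(c : Cd) f c =
  \sum_(x : V) f (inl x) + (f (inr (inl tt)) + \sum_(y : F) f (inr (inr y))).
Proof.
rewrite big_sumType; congr (_ + _); rewrite big_sumType; congr (_ + _).
by rewrite (big_pred1 tt) // => -[].
Qed.

Lemma ip_sym l l' : ip l l' = ip l' l.
Proof. by apply: eq_bigr => c _; rewrite mulrC. Qed.

Lemma ip_ss b b' : ip (inl b) (inl b') = (if b == b' then q * q else 0) + be * be.
Proof.
rewrite /ip sumC; cbn [vecL]; rewrite (bigD1 b) // eqxx [X in _ + X + _]big1 => [|x hx]; last first.
  by rewrite (negbTE hx) mul0r.
rewrite [X in _ + (_ + X)]big1 => [|y _]; rewrite ?mul0r // addr0 addr0; congr (_ + _).
by rewrite eq_sym; case: (b' == b); rewrite ?mulr0.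
Qed.

Lemma ip_sh b r a : ip (inl b) (inr (r, a)) = q * (p * chi (E r a b)).
Proof.
rewrite /ip sumC; cbn [vecL]; rewrite (bigD1 b) // eqxx [X in _ + X + _]big1 => [|x hx]; last first.
  by rewrite (negbTE hx) mul0r.
by rewrite [X in _ + (_ + X)]big1 => [|y _]; rewrite ?mul0r // mulr0 !addr0.
Qed.

Lemma ip_hh r a r' a' : ip (inr (r, a)) (inr (r', a')) =
  p * p * \sum_(v : V) chi (E r a v) * chi (E r' a' v) + (if r == r' then be * be else 0).
Proof.
rewrite /ip sumC; cbn [vecL]; rewrite mulr0 add0r mulr_sumr; congr (_ + _).
  by apply: eq_bigr => v _; ring.
rewrite (bigD1 r) // eqxx big1 => [|y hy]; last first.
  by rewrite (negbTE hy) mul0r.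
by rewrite /= eq_sym; case: (r' == r); ring.
Qed.


Lemma chi_prod r a r' a' : \sum_(v : V) chi (E r a v) * chi (E r' a' v)
  = \sum_(v : V) chi (E r a v + E r' a' v).
Proof. by apply: eq_bigr => v _; rewrite chiD //; apply: E_bit. Qed.

Lemma same_basis r a a' : a != a' -> \sum_(v : V) chi (E r a v + E r a' v) = 0.
Proof.
move=> haa.
pose g := fun v : V => Tr ((a.2 + a'.2) * v.2) + (b2F a.1 + b2F a'.1) * b2F v.1.
rewrite (eq_bigr (fun v => chi (g v))) => [|v _]; last first.
  by congr chi; rewrite /g /E mulrDl TrD; ring: h2.
have gb : forall v, bit (g v).
  move=> v; rewrite /g; apply: bitD; first exact: bitTr.
  by apply: bitM; [apply: bitD|]; exact: b2F_bit.
have gadd : forall v w, g (vadd v w) = g v + g w.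
  by case=> [xi x] [eta y]; rewrite /g /vadd /= b2F_xor mulrDr TrD; ring.
case: (eqVneq a.2 a'.2) => h2a.
  have h1a : a.1 != a'.1.
    apply: contraNneq haa => h1; case: a a' h1 h2a {g gb gadd} => [b x] [b' x'] /= -> ->.
    by rewrite eqxx.
  apply: (sum_zero (v0 := (true, 0)) gb gadd).
  rewrite /g /= mulr0 Tr0 add0r mulr1.
  by case: (a.1) (a'.1) h1a => -[]; rewrite //= ?addr0 ?add0r.
have hnz : a.2 + a'.2 != 0.
  apply/eqP => h; move/eqP: h2a; apply; exact: char2_eq h.
apply: (sum_zero (v0 := (false, (a.2 + a'.2)^-1)) gb gadd).
by rewrite /g /= mulfV // Tr1 mulr0 addr0.
Qed.

Lemma diff_basis r a r' a' : r != r' ->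
  (\sum_(v : V) chi (E r a v + E r' a' v)) ^+ 2 = #|{: V}|%:R.
Proof.
move=> hr; apply: sum_sq => [v|| u hu].
- by apply: bitD; exact: E_bit.
- by rewrite !E0 addr0.
exists (fun v => P r v u + P r' v u); split.
- by move=> v; apply: bitD; exact: P_bit.
- by move=> v w; rewrite !P_add; ring.
- case: (boolP [exists v, P r v u + P r' v u == 1]) => [/existsP [v /eqP hv]|].
    by exists v.
  move=> /existsPn hn; exfalso; move/negP: hu; apply; apply/eqP.
  apply: (radical hr) => v.
  have := hn v; have : bit (P r v u + P r' v u) by apply: bitD; exact: P_bit.
  by case/bitP=> -> //; rewrite eqxx.
- by move=> v; rewrite -(E_polar r a v u) -(E_polar r' a' v u); ring: h2.
Qed.

Lemma abs_sq (S : R) : S ^+ 2 = s * s -> `|S| = s.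
Proof.
move=> h; have : S ^+ 2 == s ^+ 2 by rewrite h expr2.
rewrite eqf_sqr => /orP [/eqP ->|/eqP ->]; rewrite ?normrN ger0_norm //.
Qed.

Lemma bb0 : 0 <= be * be.
Proof. nra. Qed.

Lemma ip_one l : ip l l = 1.
Proof.
case: l => [b|[r a]]; first by rewrite ip_ss eqxx.
rewrite ip_hh eqxx (eq_bigr (fun _ => 1)) => [|v _]; last exact: chi_sq.
by rewrite sumr_const.
Qed.

Lemma chi_pm e : chi e = 1 \/ chi e = -1.
Proof. by rewrite chiE; case: (e == 0); [left|right]. Qed.

Lemma ip_off l l' : l != l' -> `|ip l l'| = be * be.
Proof.
have sh : forall b r a, `|ip (inl b) (inr (r, a))| = be * be.
  move=> b r a; rewrite ip_sh mulrA H3.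
  by case: (chi_pm (E r a b)) => ->; rewrite ?mulr1 ?mulrN1 ?normrN ger0_norm // bb0.
case: l l' => [b|[r a]] [b'|[r' a']] hne.
- rewrite ip_ss; have -> : (b == b') = false by apply/negbTE; apply: contraNneq hne => ->.
  by rewrite add0r ger0_norm // bb0.
- exact: sh.
- by rewrite ip_sym sh.
- rewrite ip_hh chi_prod; case: (eqVneq r r') => hr.
    rewrite hr in hne *; have haa : a != a'.
      by apply: contraNneq hne => ->.
    by rewrite same_basis // mulr0 add0r ger0_norm // bb0.
  rewrite addr0 normrM (abs_sq (etrans (diff_basis a a' hr) (esym Hs))) ger0_norm ?H4 //.
  nra.
Qed.

End Kerdock.

Lemma sum_enum (T : finType) (c0 : T) (f : T -> R) :
  \sum_(c : T) f c = \sum_(j < #|T|) f (nth c0 (enum T) j).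
Proof. by rewrite -(@big_enum _ _ _ _ predT) /= (big_nth c0) cardE big_mkord. Qed.

Lemma inner_sum N (x y : nat -> R) : inner N x y = \sum_(j < N) x j * y j.
Proof.
case: N => [|m]; first by rewrite big_ord0.
rewrite /inner; elim: m => [|m IH]; first by rewrite big_ord_recr big_ord0 /= add0r.
rewrite big_ord_recr /= -IH //.
Qed.

Section Final.
Variable F : finFieldType.
Variable k : nat.
Hypothesis h2 : (2%:R : F) = 0.
Hypothesis hcard : #|F| = (2 ^ k)%N.
Hypothesis hodd : odd k.
Variables p q be s : R.
Hypothesis H1 : q * q + be * be = 1.
Hypothesis H2 : p * p * #|{: bool * F}|%:R + be * be = 1.
Hypothesis H3 : q * p = be * be.
Hypothesis H4 : p * p * s = be * be.
Hypothesis Hs : s * s = #|{: bool * F}|%:R.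
Hypothesis Hs0 : 0 <= s.
Hypothesis Hlt : be * be < 1.

Local Notation Cd := ((bool * F) + (unit + F))%type.
Local Notation Ln := ((bool * F) + (F * (bool * F)))%type.

Definition c0 : Cd := inl (false, 0).
Definition l0 : Ln := inl (false, 0).
Definition vv (i j : nat) := vecL k p q be (nth l0 (enum {: Ln}) i) (nth c0 (enum {: Cd}) j).

Lemma inner_vv N i j : N = #|{: Cd}| -> inner N (vv i) (vv j) =
  ip k p q be (nth l0 (enum {: Ln}) i) (nth l0 (enum {: Ln}) j).
Proof. by move->; rewrite inner_sum /ip (sum_enum c0). Qed.

Lemma final N : N = #|{: Cd}| -> equiangular_lines N #|{: Ln}| vv.
Proof.
move=> hN.
have hnth : forall i j, (i < #|{: Ln}|)%coq_nat -> (j < #|{: Ln}|)%coq_nat -> i <> j ->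
    nth l0 (enum {: Ln}) i != nth l0 (enum {: Ln}) j.
  move=> i j /ltP hi /ltP hj hij; rewrite nth_uniq ?enum_uniq -?cardE //.
  by apply/eqP.
split; [|split].
- by move=> i _; rewrite inner_vv // ip_one.
- move=> i j hi hj hij [a ha].
  have hoff := ip_off h2 hcard hodd H3 H4 Hs Hs0 (hnth i j hi hj hij).
  have e1 : inner N (vv i) (vv j) = a * inner N (vv j) (vv j).
    rewrite !inner_sum mulr_sumr; apply: eq_bigr => m _.
    by rewrite ha ?RmultE ?mulrA //; apply/ltP; exact: ltn_ord.
  have e2 : inner N (vv i) (vv i) = a * a * inner N (vv j) (vv j).
    rewrite !inner_sum mulr_sumr; apply: eq_bigr => m _.
    by rewrite ha; [rewrite !RmultE; ring|apply/ltP; exact: ltn_ord].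
  rewrite !inner_vv // !(ip_one k H1 H2) in e1 e2.
  rewrite e1 in hoff.
  have ea : a * a = 1 by nra.
  have eabs : `|a| = 1.
    have : `|a| * `|a| = 1 by rewrite -normrM ea normr1.
    have := normr_ge0 a; nra.
  have : `|a * 1| = `|a| by rewrite mulr1.
  rewrite hoff eabs => hb; move: Hlt; rewrite hb; nra.
- exists (be * be); move=> i j hi hj hij.
  by rewrite inner_vv //; exact: (ip_off h2 hcard hodd H3 H4 Hs Hs0 (hnth i j hi hj hij)).
Qed.

End Final.


Import Order.TTheory.
Lemma pow_expn m n : Nat.pow m n = expn m n.
Proof. elim: n => [|n IH] //=; by rewrite expnS IH. Qed.

Lemma main_core (t K : nat) : Peano.le 1 t -> K = Nat.pow 2 (subn (muln 2 t) 1) ->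
  exists (r : nat) (v : nat -> nat -> R),
    r = (2 * K + K * (2 * K))%N /\ equiangular_lines (3 * K + 1)%N r v.
Proof.
move=> /ssrnat.leP ht hK.
set k := (2 * t - 1)%N.
have hk0 : (0 < k)%N by rewrite /k; lia.
have [F hch hcF] := pPrimePowerField (p := 2) (isT : prime 2) hk0.
have h2 : (2%:R : F) = 0 := pcharf0 hch.
have hodd : odd k.
  have -> : k = (t.-1 * 2).+1 by rewrite /k; lia.
  by rewrite /= oddM andbF.
have hK' : K = (2 ^ k)%N by rewrite hK pow_expn.
have cV : #|{: bool * F}| = (2 * K)%N by rewrite card_prod card_bool hcF hK'.
pose Nn : R := #|{: bool * F}|%:R.
pose s : R := (2 ^ t)%:R.
have Hs : s * s = Nn.
  rewrite /s /Nn -natrM -expnD cV hK' -expnS; congr (_ %:R); congr (2 ^ _)%N.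
  rewrite /k; lia.
have Hs0 : 0 <= s by rewrite /s ler0n.
have Nn0 : 0 < Nn by rewrite /Nn cV hK' ltr0n muln_gt0 expn_gt0.
have Ns0 : 0 < Nn + s by lra.
pose p := Num.sqrt ((Nn + s)^-1).
pose be := Num.sqrt (s / (Nn + s)).
pose q := s * p.
have pp : p * p = (Nn + s)^-1.
  by rewrite /p -expr2 sqr_sqrtr // invr_ge0 ltW.
have bb : be * be = s / (Nn + s).
  by rewrite /be -expr2 sqr_sqrtr // divr_ge0 // ltW.
have Nsne : Nn + s != 0 by rewrite gt_eqF.
have H1 : q * q + be * be = 1.
  have -> : q * q = s * s * (p * p) by rewrite /q; ring.
  by rewrite pp bb Hs; field.
have H2 : p * p * Nn + be * be = 1 by rewrite pp bb; field.
have H3 : q * p = be * be.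
  by rewrite /q -mulrA pp bb.
have H4 : p * p * s = be * be by rewrite pp bb mulrC.
have Hlt : be * be < 1 by rewrite bb ltr_pdivrMr // mul1r; lra.
have hN : (3 * K + 1)%N = #|{: bool * F + (unit + F)}|.
  by rewrite !card_sum card_unit !card_prod card_bool hcF -hK'; lia.
exists #|{: bool * F + F * (bool * F)}|, (vv F k p q be); split.
  by rewrite card_sum !card_prod card_bool hcF -hK'.
exact: (final h2 hcF hodd H1 H2 H3 H4 Hs Hs0 Hlt hN).
Qed.

End M.

Open Scope R_scope.

Theorem theorem2 : forall t : nat, (1 <= t)%nat ->
  let n := (3 * 2 ^ (2 * t - 1) + 1)%nat in
  exists (r : nat) (v : nat -> nat -> R),
    INR r = 2 / 9 * (INR n - 1) * (INR n + 2) /\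
    equiangular_lines n r v.
Proof.
intros t ht n.
destruct (@M.main_core t (2 ^ (2 * t - 1))) as [r [v [hr hv]]].
- exact ht.
- reflexivity.
- exists r, v; split; [|exact hv].
  rewrite hr; unfold n.
  change (ssrnat.addn (ssrnat.muln 2 (2 ^ (2 * t - 1))) (ssrnat.muln (2 ^ (2 * t - 1)) (ssrnat.muln 2 (2 ^ (2 * t - 1)))))
    with (2 * 2 ^ (2 * t - 1) + 2 ^ (2 * t - 1) * (2 * 2 ^ (2 * t - 1)))%nat.
  repeat rewrite plus_INR; repeat rewrite mult_INR.
  remember (INR (2 ^ (2 * t - 1))) as x. simpl.
  field.
Qed.
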